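(* Let $F:\mathbb{R}^p\to\mathbb{R}^p$ be single-valued and $T:\mathbb{R}^p\rightrightarrows\mathbb{R}^p$ (not necessarily monotone), $\Phi:=F+T$, $\eta>0$, $\beta>0$, and assume $\mathrm{ran}\,J_{\eta T}\subseteq\mathrm{dom}\,F=\mathbb{R}^p$ and $\mathrm{dom}\,J_{\eta T}=\mathbb{R}^p$, with the resolvents single-valued. Let $\kappa_1,\kappa_2\ge0$ and let $\{(x^k,y^k)\}$ be generated by the scheme (GFBFS2): start from $x^0\in\mathrm{dom}\,\Phi$, set $x^{-1}=y^{-1}:=x^0$, and for $k\ge0$ $$y^k:=J_{\frac{\eta}{\beta}T}\big(x^k-\tfrac{\eta}{\beta}u^k\big),\qquad x^{k+1}:=\beta y^k+(1-\beta)x^k-\eta(Fy^k-u^k),$$ for some $u^k\in\mathbb{R}^p$, and set $\zeta^k:=\frac{\beta}{\eta}(x^k-y^k)-u^k\in Ty^k$. Then for any $\gamma>0$, any $x^\star\in\mathrm{zer}\,\Phi$ and any $k\ge0$, $$\begin{aligned}\|x^{k+1}-x^\star\|^2\le{}&\|x^k-x^\star\|^2-\beta\|x^k-y^k\|^2+\tfrac{\eta^2}{\gamma}\|Fy^k-u^k\|^2-(\beta-\gamma)\|x^{k+1}-y^k\|^2\\&-2\eta\langle Fy^k+\zeta^k,y^k-x^\star\rangle-(1-\beta)\|x^{k+1}-x^k\|^2.\end{aligned}$$ Moreover, assume in addition that $F$ is $L$-Lipschitz continuous, that $u^k$ satisfies $\|Fx^k-u^k\|^2\le\kappa_1\|Fx^k-Fy^{k-1}\|^2+\kappa_2\|Fx^k-Fx^{k-1}\|^2$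 for all $k\ge0$, and that there exist $x^\star\in\mathrm{zer}\,\Phi$ and $\rho\ge0$ with $\langle w,x-x^\star\rangle\ge-\rho\|w\|^2$ for all $(x,w)\in\mathrm{gra}\,\Phi$. For $r>0$ and $\gamma>0$ define $$\mathcal{P}_k:=\|x^k-x^\star\|^2+\tfrac{\kappa_1(1+r)L^2\eta^2}{r\gamma}\|x^k-y^{k-1}\|^2+\tfrac{\kappa_2(1+r)L^2\eta^2}{r\gamma}\|x^k-x^{k-1}\|^2.$$ Then for any $s>0$, $\mu\in[0,1]$ and $k\ge0$, $$\begin{aligned}\mathcal{P}_{k+1}\le{}&\mathcal{P}_k-\Big(\beta-\tfrac{(1+r)L^2\eta^2}{\gamma}-\tfrac{2\mu\rho(1+s)}{s\eta}\Big)\|y^k-x^k\|^2\\&-\Big(\beta-\gamma-\tfrac{\kappa_1(1+r)L^2\eta^2}{r\gamma}-\tfrac{2\mu\rho(1+s)}{\eta}\Big)\|x^{k+1}-y^k\|^2\\&-\Big(1-\beta-\tfrac{\kappa_2(1+r)L^2\eta^2}{r\gamma}-\tfrac{2(1-\mu)\rho}{\eta}\Big)\|x^{k+1}-x^k\|^2.\end{aligned}$$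
   Context: $\mathrm{zer}\,\Phi:=\{x:0\in Fx+Tx\}$, $\mathrm{gra}\,\Phi:=\{(x,w):w\in\Phi x\}$. $J_{\lambda T}:=(\mathbb{I}+\lambda T)^{-1}$ is the resolvent of $\lambda T$; $\mathrm{ran}$ and $\mathrm{dom}$ denote range and domain. $F$ is $L$-Lipschitz if $\|Fx-Fy\|\le L\|x-y\|$. *)

(* Defs.v *)
From mathcomp Require Import all_boot all_order all_algebra.
From mathcomp Require Import reals.
Set Implicit Arguments. Unset Strict Implicit. Unset Printing Implicit Defensive.
Import Order.TTheory GRing.Theory Num.Theory.
Local Open Scope ring_scope.

Section Defs.
Variables (R : realType) (p : nat).
Notation V := 'rV[R]_p.

Definition dot (u v : V) : R := \sum_(i < p) u 0 i * v 0 i.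
Definition norm (u : V) : R := Num.sqrt (dot u u).

(* set-valued operators T : R^p => R^p are relations: T x w  <->  w \in T x *)
(* resolvent J_{lam T} = (I + lam T)^{-1}:  resolvent T lam v z  <->  z \in J_{lam T} v *)
Definition resolvent (T : V -> V -> Prop) (lam : R) (v z : V) : Prop :=
  exists w, T z w /\ v = z + lam *: w.

Definition resolvent_full_dom (T : V -> V -> Prop) (lam : R) : Prop :=
  forall v, exists z, resolvent T lam v z.

Definition resolvent_single_valued (T : V -> V -> Prop) (lam : R) : Prop :=
  forall v z1 z2, resolvent T lam v z1 -> resolvent T lam v z2 -> z1 = z2.

Definition in_dom_Phi (F : V -> V) (T : V -> V -> Prop) (x : V) : Prop :=
  exists w, T x w.

Definition gra_Phi (F : V -> V) (T : V -> V -> Prop) (x w : V) : Prop :=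
  exists t, T x t /\ w = F x + t.

Definition zer_Phi (F : V -> V) (T : V -> V -> Prop) (x : V) : Prop :=
  gra_Phi F T x 0.

Definition lipschitz (L : R) (F : V -> V) : Prop :=
  forall x y, norm (F x - F y) <= L * norm (x - y).

(* s^{k-1} with the convention s^{-1} := d *)
Definition seq_prev (s : nat -> V) (d : V) (k : nat) : V :=
  match k with 0%N => d | k'.+1 => s k' end.

End Defs.

(* Main.v *)
Require Import Defs.
From mathcomp Require Import all_boot all_order all_algebra.
From mathcomp Require Import reals ring lra.
Import Order.TTheory GRing.Theory Num.Theory.
Local Open Scope ring_scope.

Section H.
Set Implicit Arguments. Unset Strict Implicit.
Variables (R : realType) (p : nat).
Implicit Types (u v w : 'rV[R]_p).

Lemma dotC u v : dot u v = dot v u.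
Proof. by apply: eq_bigr => i _; rewrite mulrC. Qed.
Lemma dotDl u v w : dot (u + v) w = dot u w + dot v w.
Proof. by rewrite /dot -big_split; apply: eq_bigr => i _; rewrite mxE mulrDl. Qed.
Lemma dotZl (a : R) u v : dot (a *: u) v = a * dot u v.
Proof. by rewrite /dot mulr_sumr; apply: eq_bigr => i _; rewrite mxE mulrA. Qed.
Lemma dotNl u v : dot (- u) v = - dot u v.
Proof. by rewrite -scaleN1r dotZl mulN1r. Qed.
Lemma dotBl u v w : dot (u - v) w = dot u w - dot v w.
Proof. by rewrite dotDl dotNl. Qed.
Lemma dotDr u v w : dot w (u + v) = dot w u + dot w v.
Proof. by rewrite dotC dotDl !(dotC w). Qed.
Lemma dotZr (a : R) u v : dot v (a *: u) = a * dot v u.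
Proof. by rewrite dotC dotZl dotC. Qed.
Lemma dotNr u v : dot v (- u) = - dot v u.
Proof. by rewrite dotC dotNl dotC. Qed.
Lemma dotBr u v w : dot w (u - v) = dot w u - dot w v.
Proof. by rewrite dotDr dotNr. Qed.
Lemma dot_ge0 u : 0 <= dot u u.
Proof. by apply: sumr_ge0 => i _; rewrite -expr2 sqr_ge0. Qed.
Lemma norm2E u : norm u ^+ 2 = dot u u.
Proof. by rewrite /norm sqr_sqrtr // dot_ge0. Qed.
End H.
Section K.
Set Implicit Arguments. Unset Strict Implicit.
Variables (R : realType) (p : nat).
Implicit Types (u v w : 'rV[R]_p).

Lemma key (x0 x1 y xs Fy u : 'rV[R]_p) (eta beta gamma : R) :
  0 < eta -> 0 < gamma ->
  x1 = beta *: y + (1 - beta) *: x0 - eta *: (Fy - u) ->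
  let zeta := (beta / eta) *: (x0 - y) - u in
     norm (x1 - xs) ^+ 2 <=
       norm (x0 - xs) ^+ 2 - beta * norm (x0 - y) ^+ 2
       + eta ^+ 2 / gamma * norm (Fy - u) ^+ 2
       - (beta - gamma) * norm (x1 - y) ^+ 2
       - 2 * eta * dot (Fy + zeta) (y - xs)
       - (1 - beta) * norm (x1 - x0) ^+ 2.
Proof.
move=> he hg hx1 /=.
have ne : eta != 0 by rewrite gt_eqF.
have ng : gamma != 0 by rewrite gt_eqF.
set d := x0 - y; set h := x1 - y; set a := x0 - xs.
have e1 : x1 - xs = a - d + h by rewrite /a /d /h; apply/rowP => i; rewrite !mxE; ring.
have e2 : x1 - x0 = h - d by rewrite /a /d /h; apply/rowP => i; rewrite !mxE; ring.
have e3 : Fy - u = eta^-1 *: ((1 - beta) *: d - h).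
  by rewrite /d /h hx1; apply/rowP => i; rewrite !mxE; field.
have e4 : Fy + ((beta / eta) *: (x0 - y) - u) = eta^-1 *: (d - h).
  by rewrite /d /h hx1; apply/rowP => i; rewrite !mxE; field.
have e5 : y - xs = a - d by rewrite /a /d; apply/rowP => i; rewrite !mxE; ring.
rewrite e1 e2 e3 e4 e5 !norm2E; clearbody d h a.
have Q := dot_ge0 ((1 - beta) *: d + (gamma - 1) *: h).
move: Q.
rewrite !(dotDl, dotDr, dotBl, dotBr, dotNl, dotNr, dotZl, dotZr) ?(dotC d a) ?(dotC h a) ?(dotC h d).
move=> Q.
set Qv := (X in 0 <= X) in Q.
rewrite -subr_ge0.
match goal with |- is_true (0 <= ?E) => have -> : E = gamma^-1 * Qv end.
  rewrite /Qv; field; exact/andP.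
by apply: mulr_ge0 => //; rewrite invr_ge0 ltW.
Qed.
End K.
Section K2.
Set Implicit Arguments. Unset Strict Implicit.
Variables (R : realType) (p : nat).
Implicit Types (u v w : 'rV[R]_p).

Lemma norm_ge0' u : 0 <= norm u.
Proof. exact: sqrtr_ge0. Qed.

Lemma normN2 u v : norm (u - v) ^+ 2 = norm (v - u) ^+ 2.
Proof. by rewrite !norm2E -opprB dotNl dotNr opprK. Qed.

Lemma lip2 (L : R) u v w z : norm (u - v) <= L * norm (w - z) ->
  norm (u - v) ^+ 2 <= L ^+ 2 * norm (w - z) ^+ 2.
Proof.
move=> H; have h1 := norm_ge0' (u - v); rewrite -exprMn.
nra.
Qed.

Lemma young u v (r : R) : 0 < r ->
  norm (u + v) ^+ 2 <= (1 + r) * norm u ^+ 2 + (1 + r) / r * norm v ^+ 2.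
Proof.
move=> hr; have nr : r != 0 by rewrite gt_eqF.
have Q := dot_ge0 (r *: u - v).
move: Q; rewrite !norm2E !(dotDl, dotDr, dotBl, dotBr, dotNl, dotNr, dotZl, dotZr) (dotC v u) => Q.
set Qv := (X in 0 <= X) in Q.
rewrite -subr_ge0.
match goal with |- is_true (0 <= ?E) => have -> : E = r^-1 * Qv end.
  by rewrite /Qv; field.
by apply: mulr_ge0 => //; rewrite invr_ge0 ltW.
Qed.

Lemma young2 u v (s : R) : 0 < s ->
  norm (u - v) ^+ 2 <= (1 + s) / s * norm v ^+ 2 + (1 + s) * norm u ^+ 2.
Proof.
move=> hs; have ns : s != 0 by rewrite gt_eqF.
have Q := dot_ge0 (v + s *: u).
move: Q; rewrite !norm2E !(dotDl, dotDr, dotBl, dotBr, dotNl, dotNr, dotZl, dotZr) (dotC v u) => Q.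
set Qv := (X in 0 <= X) in Q.
rewrite -subr_ge0.
match goal with |- is_true (0 <= ?E) => have -> : E = s^-1 * Qv end.
  by rewrite /Qv; field.
by apply: mulr_ge0 => //; rewrite invr_ge0 ltW.
Qed.

End K2.
Section K3.
Set Implicit Arguments. Unset Strict Implicit.
Variables (R : realType) (p : nat).

Lemma key2 (x0 x1 y xs Fy u Fx yp xp Fyp Fxp : 'rV[R]_p)
  (eta beta gamma kappa1 kappa2 L rho r s mu : R) :
  0 < eta -> 0 < gamma -> 0 <= kappa1 -> 0 <= kappa2 -> 0 <= rho -> 0 < r ->
  0 < s -> 0 <= mu <= 1 ->
  x1 = beta *: y + (1 - beta) *: x0 - eta *: (Fy - u) ->
  dot (Fy + ((beta / eta) *: (x0 - y) - u)) (y - xs) >=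
     - rho * norm (Fy + ((beta / eta) *: (x0 - y) - u)) ^+ 2 ->
  norm (Fy - Fx) <= L * norm (y - x0) ->
  norm (Fx - Fyp) <= L * norm (x0 - yp) ->
  norm (Fx - Fxp) <= L * norm (x0 - xp) ->
  norm (Fx - u) ^+ 2 <= kappa1 * norm (Fx - Fyp) ^+ 2 + kappa2 * norm (Fx - Fxp) ^+ 2 ->
     norm (x1 - xs) ^+ 2
     + kappa1 * (1 + r) * L ^+ 2 * eta ^+ 2 / (r * gamma) * norm (x1 - y) ^+ 2
     + kappa2 * (1 + r) * L ^+ 2 * eta ^+ 2 / (r * gamma) * norm (x1 - x0) ^+ 2
     <= norm (x0 - xs) ^+ 2
     + kappa1 * (1 + r) * L ^+ 2 * eta ^+ 2 / (r * gamma) * norm (x0 - yp) ^+ 2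
     + kappa2 * (1 + r) * L ^+ 2 * eta ^+ 2 / (r * gamma) * norm (x0 - xp) ^+ 2
       - (beta - (1 + r) * L ^+ 2 * eta ^+ 2 / gamma - 2 * mu * rho * (1 + s) / (s * eta))
           * norm (y - x0) ^+ 2
       - (beta - gamma - kappa1 * (1 + r) * L ^+ 2 * eta ^+ 2 / (r * gamma)
           - 2 * mu * rho * (1 + s) / eta) * norm (x1 - y) ^+ 2
       - (1 - beta - kappa2 * (1 + r) * L ^+ 2 * eta ^+ 2 / (r * gamma)
           - 2 * (1 - mu) * rho / eta) * norm (x1 - x0) ^+ 2.
Proof.
move=> he hg hk1 hk2 hrho hr hs /andP[hmu0 hmu1] hx1 hgra hl1 hl2 hl3 hu.
have ne : eta != 0 by rewrite gt_eqF.
have ng : gamma != 0 by rewrite gt_eqF.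
have nr : r != 0 by rewrite gt_eqF.
have ns : s != 0 by rewrite gt_eqF.
have K := key xs he hg hx1; rewrite /= in K.
rewrite (normN2 x0 y) in K.
have ez : Fy + ((beta / eta) *: (x0 - y) - u) = (- eta^-1) *: (x1 - x0).
  by rewrite hx1; apply/rowP => i; rewrite !mxE; field.
rewrite ez in hgra K.
have nz : norm ((- eta^-1) *: (x1 - x0)) ^+ 2 = eta^-1 ^+ 2 * norm (x1 - x0) ^+ 2.
  by rewrite !norm2E dotZl dotZr mulrA mulrNN expr2.
rewrite nz in hgra.
set W := dot _ (y - xs) in hgra K.
have F2 := young2 (x1 - y) (x0 - y) hs.
have e1 : x1 - y - (x0 - y) = x1 - x0 by apply/rowP => i; rewrite !mxE; ring.
rewrite e1 (normN2 x0 y) in F2.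
have F3 := young (Fy - Fx) (Fx - u) hr.
have e2 : Fy - Fx + (Fx - u) = Fy - u by apply/rowP => i; rewrite !mxE; ring.
rewrite e2 in F3.
have F4 := lip2 hl1. have F5 := lip2 hl2. have F6 := lip2 hl3.
set G := norm (x1 - x0) ^+ 2 in K F2 hgra *.
set H := norm (x1 - y) ^+ 2 in K F2 *.
set D := norm (y - x0) ^+ 2 in K F2 F4 *.
set X := norm (Fy - u) ^+ 2 in K F3 *.
set A := norm (x0 - yp) ^+ 2 in F5 *.
set B := norm (x0 - xp) ^+ 2 in F6 *.
set Y1 := norm (Fx - Fyp) ^+ 2 in F5 hu.
set Y2 := norm (Fx - Fxp) ^+ 2 in F6 hu.
set Z := norm (Fy - Fx) ^+ 2 in F3 F4.
set U := norm (Fx - u) ^+ 2 in F3 hu.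
have ie : 0 < eta^-1 by rewrite invr_gt0.
have ig : 0 < gamma^-1 by rewrite invr_gt0.
have ir : 0 < r^-1 by rewrite invr_gt0.
have iss : 0 < s^-1 by rewrite invr_gt0.
have HX : X <= (1 + r) * L ^+ 2 * D + (1 + r) / r * (kappa1 * L ^+ 2 * A + kappa2 * L ^+ 2 * B).
  apply: (le_trans F3); apply: lerD.
    by rewrite -mulrA; apply: ler_wpM2l => //; lra.
  apply: ler_wpM2l; first by apply: mulr_ge0; [lra | exact: ltW].
  apply: (le_trans hu); apply: lerD; rewrite -mulrA; apply: ler_wpM2l => //.
have HX' : eta ^+ 2 / gamma * X <= eta ^+ 2 / gamma *
   ((1 + r) * L ^+ 2 * D + (1 + r) / r * (kappa1 * L ^+ 2 * A + kappa2 * L ^+ 2 * B)).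
  apply: ler_wpM2l => //; apply: mulr_ge0; [exact: sqr_ge0 | exact: ltW].
have HW : - (2 * eta * W) <= 2 * eta * (rho * (eta^-1 ^+ 2 * G)).
  rewrite -mulrN; apply: ler_wpM2l; first lra.
  lra.
have HG : mu * G <= mu * ((1 + s) / s * D + (1 + s) * H) by apply: ler_wpM2l.
have HG' : 2 * rho / eta * (mu * G) <= 2 * rho / eta * (mu * ((1 + s) / s * D + (1 + s) * H)).
  apply: ler_wpM2l => //; apply: mulr_ge0; [lra | exact: ltW].
set N1 := norm (x1 - xs) ^+ 2 in K *.
set N0 := norm (x0 - xs) ^+ 2 in K *.
set bX := (1 + r) * L ^+ 2 * D + (1 + r) / r * (kappa1 * L ^+ 2 * A + kappa2 * L ^+ 2 * B) in HX HX'.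
set bG := (1 + s) / s * D + (1 + s) * H in HG HG'.
have t1 : 0 <= N0 - beta * D + eta ^+ 2 / gamma * X - (beta - gamma) * H - 2 * eta * W - (1 - beta) * G - N1 by rewrite subr_ge0.
have t2 : 0 <= eta ^+ 2 / gamma * (bX - X).
  apply: mulr_ge0; last by rewrite subr_ge0.
  apply: mulr_ge0; [exact: sqr_ge0 | exact: ltW].
have t3 : 0 <= 2 * eta * W + 2 * rho / eta * G.
  have -> : 2 * rho / eta * G = 2 * eta * (rho * (eta^-1 ^+ 2 * G)) by field.
  lra.
have t4 : 0 <= 2 * rho / eta * (mu * (bG - G)).
  apply: mulr_ge0; first by apply: mulr_ge0; [lra | exact: ltW].
  by apply: mulr_ge0 => //; rewrite subr_ge0.
rewrite -subr_ge0.
match goal with |- is_true (0 <= ?E) => have -> : E =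
  (N0 - beta * D + eta ^+ 2 / gamma * X - (beta - gamma) * H - 2 * eta * W - (1 - beta) * G - N1)
  + eta ^+ 2 / gamma * (bX - X) + (2 * eta * W + 2 * rho / eta * G) + 2 * rho / eta * (mu * (bG - G)) end.
  rewrite /bX /bG; field; rewrite ?ne ?ng ?nr ?ns //.
lra.
Qed.
End K3.
Theorem lemma6 (R : realType) (p : nat)
  (F : 'rV[R]_p -> 'rV[R]_p) (T : 'rV[R]_p -> 'rV[R]_p -> Prop)
  (eta beta kappa1 kappa2 : R)
  (x y u : nat -> 'rV[R]_p) :
  0 < eta -> 0 < beta ->
  resolvent_full_dom T eta ->
  resolvent_single_valued T eta ->
  resolvent_single_valued T (eta / beta) ->
  0 <= kappa1 -> 0 <= kappa2 ->
  in_dom_Phi F T (x 0%N) ->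
  (* scheme (GFBFS2) *)
  (forall k, resolvent T (eta / beta) (x k - (eta / beta) *: u k) (y k)) ->
  (forall k, x k.+1 = beta *: y k + (1 - beta) *: x k - eta *: (F (y k) - u k)) ->
  (* first claim *)
  (forall (gamma : R) (xs : 'rV[R]_p) (k : nat), 0 < gamma -> zer_Phi F T xs ->
     let zeta := (beta / eta) *: (x k - y k) - u k in
     norm (x k.+1 - xs) ^+ 2 <=
       norm (x k - xs) ^+ 2 - beta * norm (x k - y k) ^+ 2
       + eta ^+ 2 / gamma * norm (F (y k) - u k) ^+ 2
       - (beta - gamma) * norm (x k.+1 - y k) ^+ 2
       - 2 * eta * dot (F (y k) + zeta) (y k - xs)
       - (1 - beta) * norm (x k.+1 - x k) ^+ 2)
  /\
  (* second claim *)
  (forall L : R, lipschitz L F ->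
   (forall k, norm (F (x k) - u k) ^+ 2 <=
        kappa1 * norm (F (x k) - F (seq_prev y (x 0%N) k)) ^+ 2
      + kappa2 * norm (F (x k) - F (seq_prev x (x 0%N) k)) ^+ 2) ->
   forall (xs : 'rV[R]_p) (rho : R), zer_Phi F T xs -> 0 <= rho ->
   (forall xx w, gra_Phi F T xx w -> dot w (xx - xs) >= - rho * norm w ^+ 2) ->
   forall (r gamma : R), 0 < r -> 0 < gamma ->
   let P := fun k : nat =>
     norm (x k - xs) ^+ 2
     + kappa1 * (1 + r) * L ^+ 2 * eta ^+ 2 / (r * gamma) * norm (x k - seq_prev y (x 0%N) k) ^+ 2
     + kappa2 * (1 + r) * L ^+ 2 * eta ^+ 2 / (r * gamma) * norm (x k - seq_prev x (x 0%N) k) ^+ 2 in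
   forall (s mu : R) (k : nat), 0 < s -> 0 <= mu <= 1 ->
     P k.+1 <= P k
       - (beta - (1 + r) * L ^+ 2 * eta ^+ 2 / gamma - 2 * mu * rho * (1 + s) / (s * eta))
           * norm (y k - x k) ^+ 2
       - (beta - gamma - kappa1 * (1 + r) * L ^+ 2 * eta ^+ 2 / (r * gamma)
           - 2 * mu * rho * (1 + s) / eta) * norm (x k.+1 - y k) ^+ 2
       - (1 - beta - kappa2 * (1 + r) * L ^+ 2 * eta ^+ 2 / (r * gamma)
           - 2 * (1 - mu) * rho / eta) * norm (x k.+1 - x k) ^+ 2).
Proof.
move=> he hb _ _ _ hk1 hk2 _ hres hx.
have ne : eta != 0 by rewrite gt_eqF.
have nb : beta != 0 by rewrite gt_eqF.
have Tz : forall k, T (y k) ((beta / eta) *: (x k - y k) - u k).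
  move=> k; have [w [Tw E]] := hres k.
  suff -> : (beta / eta) *: (x k - y k) - u k = w by [].
  apply/rowP => i; move: (congr1 (fun v : 'rV[R]_p => v 0 i) E); rewrite !mxE => Ei.
  have -> : w 0 i = beta / eta * (eta / beta * w 0 i) by field; apply/andP.
  have -> : eta / beta * w 0 i = x k 0 i - eta / beta * u k 0 i - y k 0 i.
    by rewrite Ei; ring.
  by field; apply/andP.
split.
  move=> gamma xs k hg _ /=.
  exact: (key xs he hg (hx k)).
move=> L hL hu xs rho _ hrho hgra r gamma hr hg P s mu k hs hmu.
rewrite /P.
have G1 : dot (F (y k) + ((beta / eta) *: (x k - y k) - u k)) (y k - xs) >=
     - rho * norm (F (y k) + ((beta / eta) *: (x k - y k) - u k)) ^+ 2.
  by apply: hgra; exists ((beta / eta) *: (x k - y k) - u k); split.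
have KK := @key2 R p (x k) (x k.+1) (y k) xs (F (y k)) (u k) (F (x k))
  (seq_prev y (x 0%N) k) (seq_prev x (x 0%N) k)
  (F (seq_prev y (x 0%N) k)) (F (seq_prev x (x 0%N) k))
  eta beta gamma kappa1 kappa2 L rho r s mu he hg hk1 hk2 hrho hr hs hmu (hx k) G1
  (hL _ _) (hL _ _) (hL _ _) (hu k).
exact: KK.
Qed.
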